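(* Let $Q$ be a QNP, let $P=T_D(Q)$ be its direct translation, and let $\pi$ be a policy for $Q$ (and thus also for $P$). Then $\pi$ is $Q$-terminating if and only if $\pi$ is $P$-terminating.
   Context: A qualitative numerical problem (QNP) is a tuple $Q=\langle F,V,I,O,G\rangle$ where $F$ is a finite set of propositional variables and $V$ a finite set of numerical variables taking non-negative real values. $F$-literals are $p,\neg p$; $V$-literals are $X=0$ and $X>0$. Each action $a\in O$ has a precondition $Pre(a)$ (set of literals), propositional effects $\mathit{Eff}(a)$ (set of $F$-literals) and numerical effects $N(a)$ (atoms $Inc(X)$, $Dec(X)$, at most one per variable); if $Dec(X)\in N(a)$ then $X>0\in Pre(a)$. A state $s$ assigns truth values to $F$ and reals $s[X]\ge0$ to $V$; initial states satisfy $I$ under a closed-world assumption; goal states satisfy $G$. For applicable $a$ (i.e. $s$ satisfies $Pre(a)$), $s'\in F(a,s)$ iff the propositional effects are applied (others unchanged), $s'[X]>s[X]$ if $Inc(X)\in N(a)$, $s'[X]<s[X]$ if $Dec(X)\in N(a)$, $s'[X]=s[X]$ otherwise. A trajectory is a sequence $s_0,a_0,s_1,\dots$ with $s_0$ initial, $a_i$ applicable, $s_{i+1}\in F(a_i,s_i)$, that for some $\epsilon>0$ satisfies: for all $X,i$, $s_{i+1}[X]\ne s_i[X]$ implies $|s_{i+1}[X]-s_i[X]|\ge\epsilon$ or $0=s_{i+1}[X]<s_i[X]<\epsilon$. The boolean state $\bar s$ is the truth valuation on atoms $p\in F$ and $X=0$. A policy is a partial map $\pi$ from states to actions with $\pi(s)=\pi(s')$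 when $\bar s=\bar s'$; a $\pi$-trajectory has $a_i=\pi(s_i)$. $\pi$ is $Q$-terminating iff all $\pi$-trajectories of $Q$ are finite. $T_D(Q)$ is the FOND problem over $F\cup\{p_{X=0}:X\in V\}$ obtained by reading $X=0$ as $p_{X=0}$, $X>0$ as $\neg p_{X=0}$ in $I$, $G$, preconditions, keeping propositional effects, replacing $Inc(X)$ by the deterministic effect $\neg p_{X=0}$ and $Dec(X)$ by the nondeterministic effect $\neg p_{X=0}\mid p_{X=0}$; its states are the boolean states and $\pi$ acts via $\bar s\mapsto\pi(s)$. A $\pi$-trajectory of $T_D(Q)$ is a sequence from its initial state with $\pi(\bar s_i)$ applicable and $\bar s_{i+1}$ a possible successor. $Dec(X)$/$Inc(X)$ actions of $T_D(Q)$ are those coming from actions of $Q$ with $Dec(X)$/$Inc(X)$ in $N(a)$. An infinite $\pi$-trajectory of $T_D(Q)$ is terminating if there is $X\in V$ such that $\pi(\bar s)$ is a $Dec(X)$ action for some state $\bar s$ occurring infinitely often and $\pi(\bar s')$ is not an $Inc(X)$ action for any state $\bar s'$ occurring infinitely often. $\pi$ is $P$-terminating iff all infinite $\pi$-trajectories of $P=T_D(Q)$ are terminating. *)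

(* Defs.v *)
From mathcomp Require Import all_boot.
From Stdlib Require Import Reals.

Set Implicit Arguments.
Unset Strict Implicit.
Unset Printing Implicit Defensive.

Inductive neff := NNone | NInc | NDec.

(* A QNP  Q = <F, V, I, O, G>  with F = Fv, V = Vv (finite), O = Act (finite).
   A (consistent) set of F-literals is encoded as  Fv -> option bool
   (Some true = p, Some false = ~p, None = not mentioned);
   a set of V-literals as  Vv -> option bool
   (Some true = "X = 0", Some false = "X > 0", None = not mentioned). *)
Record qnp (Fv Vv Act : finType) := Qnp {
  initF : Fv -> option bool;
  initV : Vv -> option bool;
  goalF : Fv -> option bool;
  goalV : Vv -> option bool;
  preF  : Act -> Fv -> option bool;
  preV  : Act -> Vv -> option bool;
  effF  : Act -> Fv -> option bool;
  numN  : Act -> Vv -> neff;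
  dec_pre : forall a X, numN a X = NDec -> preV a X = Some false
}.

Section QNP.
Variables (Fv Vv Act : finType) (Q : qnp Fv Vv Act).

(* states of Q: truth values for F and reals for V (non-negativity is
   required of every state occurring in a trajectory, see qstate_ok) *)
Definition qstate := ((Fv -> bool) * (Vv -> R))%type.
Definition qstate_ok (s : qstate) : Prop := forall X, Rle 0%R (s.2 X).

(* boolean states: valuation of the atoms p in F and p_{X=0} for X in V *)
Definition bstate := ((Fv -> bool) * (Vv -> bool))%type.

Definition bar (s : qstate) : bstate :=
  (s.1, fun X => if Req_dec_T (s.2 X) 0%R then true else false).

(* policies: partial maps on states depending only on the boolean state;
   represented by their (well-defined) action on boolean states *)
Definition policy := bstate -> option Act.

(* the initial boolean state, from I under the closed-world assumption *)
Definition init_bstate : bstate :=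
  (fun p => initF Q p == Some true, fun X => initV Q X == Some true).

Definition q_initial (s : qstate) : Prop := bar s = init_bstate.

Definition q_applicable (a : Act) (s : qstate) : Prop :=
  (forall p b, preF Q a p = Some b -> s.1 p = b) /\
  (forall X b, preV Q a X = Some b -> (if b then s.2 X = 0%R else Rlt 0%R (s.2 X))).

Definition q_succ (a : Act) (s s' : qstate) : Prop :=
  (forall p, s'.1 p = match effF Q a p with Some b => b | None => s.1 p end) /\
  (forall X, match numN Q a X with
             | NInc => Rlt (s.2 X) (s'.2 X)
             | NDec => Rlt (s'.2 X) (s.2 X)
             | NNone => s'.2 X = s.2 X
             end).

Definition eps_cond (s : nat -> qstate) : Prop :=
  exists eps, Rlt 0%R eps /\
    forall X i, (s i.+1).2 X <> (s i).2 X ->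
      Rle eps (Rabs (Rminus ((s i.+1).2 X) ((s i).2 X))) \/
      (0%R = (s i.+1).2 X /\ Rlt ((s i.+1).2 X) ((s i).2 X) /\ Rlt ((s i).2 X) eps).

Definition q_pi_traj_inf (pi : policy) (s : nat -> qstate) : Prop :=
  q_initial (s 0) /\ (forall i, qstate_ok (s i)) /\
  (forall i, exists a, pi (bar (s i)) = Some a /\
                       q_applicable a (s i) /\ q_succ a (s i) (s i.+1)) /\
  eps_cond s.

Definition Q_terminating (pi : policy) : Prop :=
  ~ exists s, q_pi_traj_inf pi s.

Definition td_init : bstate := init_bstate.

Definition td_applicable (a : Act) (t : bstate) : Prop :=
  (forall p b, preF Q a p = Some b -> t.1 p = b) /\
  (forall X b, preV Q a X = Some b -> t.2 X = b).

Definition td_succ (a : Act) (t t' : bstate) : Prop :=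
  (forall p, t'.1 p = match effF Q a p with Some b => b | None => t.1 p end) /\
  (forall X, match numN Q a X with
             | NInc => t'.2 X = false
             | NDec => t'.2 X = false \/ t'.2 X = true
             | NNone => t'.2 X = t.2 X
             end).

Definition p_pi_traj_inf (pi : policy) (t : nat -> bstate) : Prop :=
  t 0 = td_init /\
  (forall i, exists a, pi (t i) = Some a /\
                       td_applicable a (t i) /\ td_succ a (t i) (t i.+1)).

Definition inf_often (t : nat -> bstate) (b : bstate) : Prop :=
  forall n, exists m, (n <= m)%coq_nat /\ t m = b.

Definition is_dec_action (X : Vv) (a : Act) : Prop := numN Q a X = NDec.
Definition is_inc_action (X : Vv) (a : Act) : Prop := numN Q a X = NInc.

Definition terminating_traj (pi : policy) (t : nat -> bstate) : Prop :=
  exists X,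
    (exists b a, inf_often t b /\ pi b = Some a /\ is_dec_action X a) /\
    (forall b' a', inf_often t b' -> pi b' = Some a' -> ~ is_inc_action X a').

Definition P_terminating (pi : policy) : Prop :=
  forall t, p_pi_traj_inf pi t -> terminating_traj pi t.

End QNP.

(* Main.v *)
Require Import Defs.
From mathcomp Require Import all_boot zify.
From Stdlib Require Import Reals Lra ClassicalEpsilon FunctionalExtensionality Classical.

Definition isinc (n : neff) := if n is NInc then true else false.
Definition isdec (n : neff) := if n is NDec then true else false.

Lemma cnt_ext (P : pred nat) N : (forall m, P m -> m < N) ->
  forall d, count P (iota 0 (N + d)) = count P (iota 0 N).
Proof.
move=> HP; elim=> [|d IH]; first by rewrite addn0.
rewrite addnS -addn1 iotaD count_cat IH /= add0n.
case E: (P (N + d)); last by rewrite !addn0.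
by have := HP _ E; rewrite ltnNge leq_addr.
Qed.

Lemma cnt_eq (P : pred nat) N1 N2 : (forall m, P m -> m < N1) ->
  (forall m, P m -> m < N2) -> count P (iota 0 N1) = count P (iota 0 (N1 + N2)).
Proof. by move=> H1 H2; rewrite cnt_ext. Qed.

Lemma cnt_eq2 (P : pred nat) N1 N2 : (forall m, P m -> m < N1) ->
  (forall m, P m -> m < N2) -> count P (iota 0 N2) = count P (iota 0 (N1 + N2)).
Proof. by move=> H1 H2; rewrite addnC cnt_ext. Qed.

Lemma build (z : nat -> bool) (k : nat -> neff)
  (Hk : forall i, match k i with NNone => z i.+1 = z i | NInc => z i.+1 = false
                  | NDec => z i = false end)
  (Hb : forall i, exists Nb, forall m, i <= m -> k m = NDec ->
          (forall l, i <= l < m -> k l <> NInc) -> m < Nb) :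
  exists v : nat -> nat, (forall i, (v i == 0) = z i) /\
    (forall i, match k i with NNone => v i.+1 = v i | NInc => v i < v i.+1
               | NDec => v i.+1 < v i end).
Proof.
pose Pb i m := [&& i <= m, isdec (k m) & all (fun l => ~~ isinc (k l)) (index_iota i m)].
have Hb' : forall i, exists Nb, forall m, Pb i m -> m < Nb.
  move=> i; have [Nb HN] := Hb i; exists Nb => m /and3P [im dm /allP al].
  apply: HN => //; first by case: (k m) dm.
  move=> l /andP [il lm] E; have := al l; rewrite mem_index_iota il lm E.
  by move=> /(_ isT).
pose Nb i := proj1_sig (constructive_indefinite_description _ (Hb' i)).
have HN i : forall m, Pb i m -> m < Nb i :=
  proj2_sig (constructive_indefinite_description _ (Hb' i)).
pose f i := count (Pb i) (iota 0 (Nb i)).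
pose g i := count (fun l => isinc (k l)) (iota 0 i).
have gS i : g i.+1 = g i + isinc (k i).
  by rewrite /g -addn1 iotaD count_cat /= add0n addn0.
have PbS i m : ~~ isinc (k i) -> Pb i m = (m == i) && isdec (k i) || Pb i.+1 m.
  move=> ni; rewrite /Pb; case: (ltngtP i m) => [im|mi|<-].
  - have -> : index_iota i m = i :: index_iota i.+1 m.
      by rewrite /index_iota; have -> : m - i = (m - i.+1).+1 by lia.
    rewrite /= ni; by case: (isdec _).
  - by [].

  - by rewrite /index_iota subnn /= andbT orbF.
have fS i : ~~ isinc (k i) -> f i = isdec (k i) + f i.+1.
  move=> ni; rewrite /f -(@cnt_ext (Pb i) _ (HN i) (Nb i.+1)) -(@cnt_ext (Pb i.+1) _ (HN i.+1) (Nb i)) [Nb i.+1 + _]addnC.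
  have -> : count (Pb i) (iota 0 (Nb i + Nb i.+1)) =
    count (predU (fun m => (m == i) && isdec (k i)) (Pb i.+1)) (iota 0 (Nb i + Nb i.+1)).
    by apply: eq_count => m; rewrite PbS.
  have Hd : count (predI (fun m => (m == i) && isdec (k i)) (Pb i.+1)) (iota 0 (Nb i + Nb i.+1)) = 0.
    rewrite (eq_count (a2 := pred0)) ?count_pred0 // => m /=.
    case: eqP => //= ->; rewrite /Pb ltnn //.
    by rewrite andbF.
  rewrite -[LHS]addn0 -{2}Hd count_predUI; congr (_ + _).
  case D: (isdec (k i)); last by rewrite (eq_count (a2 := pred0)) ?count_pred0 // => m; rewrite andbF.
  rewrite (eq_count (a2 := pred1 i)); last by move=> m; rewrite andbT.
  rewrite count_uniq_mem ?iota_uniq // mem_iota /= add0n.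
  suff -> : i < Nb i + Nb i.+1 by []. apply: ltn_addr; apply: HN; rewrite /Pb leqnn D /index_iota subnn //.
have f0 i : isinc (k i) -> f i = 0.
  move=> ii; rewrite /f (eq_count (a2 := pred0)) ?count_pred0 // => m.
  rewrite /Pb; case: (ltngtP i m) => [im|mi|<-] /=.
  - have -> : index_iota i m = i :: index_iota i.+1 m.
      by rewrite /index_iota; have -> : m - i = (m - i.+1).+1 by lia.
    by rewrite /= ii /= !andbF.
  - by [].
  - by case: (k i) ii.
exists (fun i => if z i then 0 else (g i + f i).+1); split.
  by move=> i; case: (z i).
move=> i; have := Hk i; have := gS i; have := fS i; have := f0 i.
case: (k i) => /= F0 FS GS HK.
- by rewrite HK FS // GS addn0.
- rewrite HK GS F0 //; case: (z i) => //; lia.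
- rewrite HK FS // GS; case: (z i.+1) => //; lia.
Qed.

Lemma php_fin (T : finType) (h : nat -> T) (S : nat -> Prop) :
  (forall N, exists m, N <= m /\ S m) ->
  exists x, forall N, exists m, N <= m /\ S m /\ h m = x.
Proof.
move=> HS; apply: NNPP => Hn.
have H1 : forall x, exists N, forall m, N <= m -> S m -> h m <> x.
  move=> x; apply: NNPP => Hx; apply: Hn; exists x => N.
  apply: NNPP => Hm; apply: Hx; exists N => m Nm Sm hm; apply: Hm; by exists m.
pose Nf x := proj1_sig (constructive_indefinite_description _ (H1 x)).
have HN x : forall m, Nf x <= m -> S m -> h m <> x :=
  proj2_sig (constructive_indefinite_description _ (H1 x)).
have HM : forall x, Nf x <= \max_x Nf x by move=> x; exact: leq_bigmax.
have [m [Mm Sm]] := HS (\max_x Nf x).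
apply: (HN (h m) m) => //.
exact: leq_trans (HM (h m)) Mm.
Qed.

Section Pf.
Variables (Fv Vv Act : finType) (Q : qnp Fv Vv Act) (pi : policy Fv Vv Act).

Definition enc (b : bstate Fv Vv) : {ffun Fv -> bool} * {ffun Vv -> bool} :=
  (finfun b.1, finfun b.2).

Lemma enc_inj : injective enc.
Proof.
move=> [f g] [f' g'] [E1 E2].
congr pair; apply: functional_extensionality => x.
- by have := congr1 (fun F : {ffun Fv -> bool} => F x) E1; rewrite !ffunE.
- by have := congr1 (fun F : {ffun Vv -> bool} => F x) E2; rewrite !ffunE.
Qed.

Lemma php_b (h : nat -> bstate Fv Vv) (S : nat -> Prop) :
  (forall N, exists m, N <= m /\ S m) ->
  exists b, forall N, exists m, N <= m /\ S m /\ h m = b.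
Proof.
move=> HS; have [x Hx] := @php_fin _ (fun m => enc (h m)) _ HS.
have [m0 [_ [_ E0]]] := Hx 0.
exists (h m0) => N; have [m [Nm [Sm Em]]] := Hx N.
exists m; split=> //; split=> //; apply: enc_inj; by rewrite Em E0.
Qed.

Lemma steps_fin (t : nat -> bstate Fv Vv) (A : nat -> Act) (R : Act -> Prop) :
  (forall i, pi (t i) = Some (A i)) ->
  (forall b a, inf_often t b -> pi b = Some a -> ~ R a) ->
  exists N, forall m, N <= m -> ~ R (A m).
Proof.
move=> HA Hno; apply: NNPP => Hn.
have Hinf : forall N, exists m, N <= m /\ R (A m).
  move=> N; apply: NNPP => H; apply: Hn; exists N => m Nm Rm; apply: H; by exists m.
have [b Hb] := @php_b t _ Hinf.
have [m [_ [Rm tm]]] := Hb 0.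
apply: (Hno b (A m)) => //.
- move=> n; have [m' [nm' [_ tm']]] := Hb n; exists m'; split=> //; exact/leP.
- by rewrite -tm HA.
Qed.

End Pf.

Section Main.
Variables (Fv Vv Act : finType) (Q : qnp Fv Vv Act) (pi : policy Fv Vv Act).

Lemma dir1 : P_terminating Q pi -> Q_terminating Q pi.
Proof.
move=> HP [s [Hinit [Hok [Hstep Heps]]]].
pose A i := proj1_sig (constructive_indefinite_description _ (Hstep i)).
have HA i : pi (bar (s i)) = Some (A i) /\ q_applicable Q (A i) (s i) /\
            q_succ Q (A i) (s i) (s i.+1) :=
  proj2_sig (constructive_indefinite_description _ (Hstep i)).
pose t i := bar (s i).
have Ht : p_pi_traj_inf Q pi t.
  split; first exact: Hinit.
  move=> i; exists (A i); have [h1 [[ap1 ap2] [sc1 sc2]]] := HA i.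
  split=> //; split.
  - split=> // X b /ap2; rewrite /t /bar /=.
    case: b; case: Req_dec_T => //= H1 H2; lra.
  - split=> // X; have := sc2 X; have := Hok i X; have := Hok i.+1 X.
    rewrite /t /bar /=; case: (numN Q (A i) X) => H1 H2 H3.
    + by rewrite H3.
    + case: Req_dec_T => //= E; lra.
    + by case: Req_dec_T; auto.
have [X [[b [a [Hb [pb Hd]]]] Hni]] := HP t Ht.
have HAt : forall i, pi (t i) = Some (A i) by move=> i; have [] := HA i.
have [N HN] := @steps_fin _ _ _ pi t A _ HAt Hni.
pose v m := (s m).2 X.
have step m : N <= m -> (v m.+1 <= v m)%R.
  move=> Nm; have [_ [_ [_ sc2]]] := HA m; have := sc2 X; have := HN m Nm.
  rewrite /is_inc_action /v; case: (numN Q (A m) X) => //= _ H; lra.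
have mono m (d : nat) : N <= m -> (v (m + d)%nat <= v m)%R.
  move=> Nm; elim: d => [|d IH]; first by rewrite addn0; lra.
  rewrite addnS; have := step (m + d) (leq_trans Nm (leq_addr _ _)); lra.
have decinf n : exists m, n <= m /\ numN Q (A m) X = NDec.
  have [m [nm tm]] := Hb n; exists m; split; first exact/leP.
  have := HAt m; rewrite tm pb => -[<-]; exact: Hd.
have [eps [eps0 Heps']] := Heps.
have key m : N <= m -> numN Q (A m) X = NDec -> (v m.+1 <= v m - eps)%R.
  move=> Nm Dm; have [_ [[_ ap2] [_ sc2]]] := HA m; have := sc2 X; rewrite Dm => Hlt.
  have Hne : (s m.+1).2 X <> (s m).2 X by move=> E; rewrite E in Hlt; lra.
  case: (Heps' X m Hne) => [He|[H0 _]].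
  - rewrite Rabs_left in He; rewrite /v; lra.
  - exfalso; have [m' [mm' Dm']] := decinf m.+1.
    have [_ [[_ ap2'] _]] := HA m'.
    have := ap2' X false (dec_pre Dm'); rewrite /=.
    have := mono m.+1 (m' - m.+1) (leq_trans Nm (leqnSn m)).
    rewrite subnKC // /v -H0 => H1 H2; lra.
have iter K : exists m, N <= m /\ (v m <= v N - INR K * eps)%R.
  elim: K => [|K [m [Nm Hm]]].
    exists N; split=> //; rewrite /=; lra.
  have [m' [mm' Dm']] := decinf m.
  have Nm' : N <= m' by apply: leq_trans mm'.
  have := key m' Nm' Dm'; have := mono m (m' - m) Nm; rewrite subnKC // => H1 H2.
  exists m'.+1; split; first by apply: leq_trans (leqnSn _).
  rewrite S_INR Rmult_plus_distr_r Rmult_1_l; set w := (INR K * eps)%R in Hm *; lra.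
have [K HK] := INR_archimed eps (v N) eps0.
have [m [_ Hm]] := iter K.
have := Hok m X; move: Hm HK; rewrite /v; set w := (INR K * eps)%R; lra.
Qed.

End Main.

Lemma nat_diff (a b : nat) : a <> b -> (1 <= Rabs (INR a - INR b))%R.
Proof.
move=> ne; case: (ltngtP a b) => [ab|ba|E]; last by [].
- have : (INR a.+1 <= INR b)%R by apply: le_INR; apply/leP.
  rewrite S_INR => H; rewrite Rabs_left; lra.
- have : (INR b.+1 <= INR a)%R by apply: le_INR; apply/leP.
  rewrite S_INR => H; rewrite Rabs_right; lra.
Qed.

Section Main2.
Variables (Fv Vv Act : finType) (Q : qnp Fv Vv Act) (pi : policy Fv Vv Act).

Lemma dir2 : Q_terminating Q pi -> P_terminating Q pi.
Proof.
move=> HQ t Ht; apply: NNPP => Hnt; apply: HQ.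
have [Ht0 Hstep] := Ht.
pose A i := proj1_sig (constructive_indefinite_description _ (Hstep i)).
have HA i : pi (t i) = Some (A i) /\ td_applicable Q (A i) (t i) /\
            td_succ Q (A i) (t i) (t i.+1) :=
  proj2_sig (constructive_indefinite_description _ (Hstep i)).
have HAt : forall i, pi (t i) = Some (A i) by move=> i; have [] := HA i.
have Hv : forall X, exists v : nat -> nat, (forall i, (v i == 0) = (t i).2 X) /\
    (forall i, match numN Q (A i) X with NNone => v i.+1 = v i | NInc => v i < v i.+1
               | NDec => v i.+1 < v i end).
  move=> X; apply: build.
    move=> i; have [_ [[_ ap2] [_ sc2]]] := HA i; have := sc2 X.
    case E: (numN Q (A i) X) => //= _; exact: ap2 _ _ (dec_pre E).
  case: (classic (exists b' a', inf_often t b' /\ pi b' = Some a' /\ is_inc_action Q X a')).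
  - move=> [b' [a' [Hinf [pb Hinc]]]] i.
    have [m0 [im0 tm0]] := Hinf i.
    have Am0 : A m0 = a' by have := HAt m0; rewrite tm0 pb => -[].
    exists m0.+1 => m im Dm Hno; rewrite ltnNge; apply/negP => mm0.
    apply: (Hno m0); last by rewrite Am0.
    by rewrite mm0 andbT; apply/leP.
  - move=> Hno.
    have Hno' : forall b a, inf_often t b -> pi b = Some a -> ~ is_dec_action Q X a.
      move=> b a Hb pb Hd; apply: Hnt; exists X; split; first by exists b, a.
      move=> b' a' Hb' pb' Hi; apply: Hno; by exists b', a'.
    have [N0 HN0] := @steps_fin _ _ _ pi t A _ HAt Hno'.
    move=> i; exists N0 => m im Dm _; rewrite ltnNge; apply/negP => Nm.
    exact: (HN0 m Nm Dm).
pose vf X := proj1_sig (constructive_indefinite_description _ (Hv X)).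
have Hvf X : (forall i, (vf X i == 0) = (t i).2 X) /\
    (forall i, match numN Q (A i) X with NNone => vf X i.+1 = vf X i | NInc => vf X i < vf X i.+1
               | NDec => vf X i.+1 < vf X i end) :=
  proj2_sig (constructive_indefinite_description _ (Hv X)).
pose s i : qstate Fv Vv := ((t i).1, fun X => INR (vf X i)).
have Hbar i : bar (s i) = t i.
  rewrite /bar /s /= [RHS]surjective_pairing; congr pair.
  apply: functional_extensionality => X; have [H0 _] := Hvf X; rewrite -H0.
  case: Req_dec_T => E.
  - by apply/esym/eqP; apply: INR_eq.
  - by apply/esym/negP => /eqP E'; apply: E; rewrite E'.
exists s; split; last split; last split.
- by rewrite /q_initial Hbar Ht0.
- by move=> i X; apply: pos_INR.
- move=> i; exists (A i); have [pa [[ap1 ap2] [sc1 sc2]]] := HA i.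
  split; first by rewrite Hbar.
  split; first split.
  + exact: ap1.
  + move=> X b /ap2 E; have [H0 _] := Hvf X; have := H0 i; rewrite E /s /=.
    case: b {E} => /eqP.
    * by move=> ->.
    * move=> ne; apply: lt_0_INR; apply/ltP; rewrite lt0n; exact/eqP.
  split; first exact: sc1.
  move=> X; have [_ H1] := Hvf X; have := H1 i; rewrite /s /=.
  case: (numN Q (A i) X) => H.
  + by rewrite H.
  + by apply: lt_INR; apply/ltP.
  + by apply: lt_INR; apply/ltP.
- exists 1%R; split; first lra.
  move=> X i ne; left; apply: nat_diff => E; apply: ne; rewrite /s /= E.
  by [].
Qed.

End Main2.

Theorem theorem4 (Fv Vv Act : finType) (Q : qnp Fv Vv Act)
    (pi : policy Fv Vv Act) :
  Q_terminating Q pi <-> P_terminating Q pi.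
Proof. split; [exact: dir2 | exact: dir1]. Qed.
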